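(* There is an absolute constant $C>0$ such that for every finite graph $G=(V,E)$ with maximum degree $\Delta$ and every $r\in\mathbb{N}$, $r\ge1$, every output $D$ of the algorithm Ratio on $(G,r)$ (for any tie-breaking) is an $r$-dominating set satisfying $$\overline{\mathrm{cong}}_r(D)\le C\cdot\max\bigl(1,\sqrt{\Delta^r}\bigr)\cdot \mathrm{mac}^r(G).$$ That is, Ratio is an $\mathcal{O}(\sqrt{\Delta^r})$-approximation algorithm for Minimum Congestion $r$-Dominating Set.
   Context: $N^r[v]$ is the set of vertices at distance at most $r$ from $v$, and $N^r[D]=\bigcup_{x\in D}N^r[x]$. $D$ is $r$-dominating if $N^r[D]=V$. The average $r$-congestion of $S$ is $\overline{\mathrm{cong}}_r(S)=\frac{1}{|V|}\sum_{v\in V}|N^r[v]\cap S|$, and $\mathrm{mac}^r(G)$ is its minimum over $r$-dominating sets. The algorithm Ratio starts with $D=\emptyset$ and, while $N^r[D]\ne V$, adds to $D$ a vertex $v$ maximizing $\frac{|N^r[v]\setminus N^r[D]|}{|N^r[v]|}$, breaking ties arbitrarily; it outputs $D$. *)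

(* Defs.v *)
From HB Require Import structures.
From mathcomp Require Import all_boot all_order all_algebra.
Set Implicit Arguments. Unset Strict Implicit. Unset Printing Implicit Defensive.
Import Order.TTheory GRing.Theory Num.Theory.

Section Defs.
Variable T : finType.
Variable e : rel T.

Definition simple_graph : Prop := symmetric e /\ irreflexive e.

Definition nbh_step (S : {set T}) : {set T} :=
  S :|: [set y | [exists x in S, e x y]].

Definition ball (r : nat) (v : T) : {set T} := iter r nbh_step [set v].

Definition ballset (r : nat) (D : {set T}) : {set T} :=
  \bigcup_(x in D) ball r x.

Definition r_dominating (r : nat) (D : {set T}) : bool := ballset r D == setT.

Definition max_degree : nat := \max_(v : T) #|[set u | e v u]|.

Definition avg_cong (R : numFieldType) (r : nat) (S : {set T}) : R :=
  (#|T|%:R)^-1 * \sum_(v : T) (#|ball r v :&: S|)%:R.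

(* mac^r(G): minimum over r-dominating sets (setT is r-dominating) *)
Definition mac (R : realFieldType) (r : nat) : R :=
  \big[Num.min/avg_cong R r setT]_(D : {set T} | r_dominating r D) avg_cong R r D.

Definition ratio_val (r : nat) (D : {set T}) (v : T) : rat :=
  (#|ball r v :\: ballset r D|)%:R / (#|ball r v|)%:R.

(* s is a possible run (sequence of chosen vertices, in order) of Ratio on
   (G, r), for some tie-breaking; the output is [set x in s]. *)
Definition ratio_run (r : nat) (s : seq T) : Prop :=
  (forall i, (i < size s)%N ->
     ~~ r_dominating r [set x in take i s] /\
     forall u : T, ratio_val r [set x in take i s] u
                   <= ratio_val r [set x in take i s] (nth u s i))%R
  /\ r_dominating r [set x in s].
End Defs.

(* Main.v *)
Require Import Defs.
From HB Require Import structures.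
From mathcomp Require Import all_boot all_order all_algebra.
Import Order.TTheory GRing.Theory Num.Theory.
From mathcomp Require Import zify ring lra.
Set Implicit Arguments. Unset Strict Implicit. Unset Printing Implicit Defensive.

Lemma in_nbh (T : finType) (e : rel T) (X : {set T}) u :
  (u \in nbh_step e X) = (u \in X) || [exists x in X, e x u].
Proof. by rewrite /nbh_step !inE. Qed.

Lemma nbh_sub (T : finType) (e : rel T) (X : {set T}) : X \subset nbh_step e X.
Proof. by apply/subsetP=> u uX; rewrite in_nbh uX. Qed.

Lemma nbh_mono (T : finType) (e : rel T) (X Y : {set T}) :
  X \subset Y -> nbh_step e X \subset nbh_step e Y.
Proof.
move=> /subsetP XY; apply/subsetP=> u; rewrite !in_nbh => /orP[/XY->//|].
move=> /existsP[x /andP[xX exu]]; apply/orP; right; apply/existsP; exists x.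
by rewrite XY.
Qed.

Lemma ballS (T : finType) (e : rel T) r v : ball e r.+1 v = nbh_step e (ball e r v).
Proof. by []. Qed.

Lemma ball_self (T : finType) (e : rel T) r v : v \in ball e r v.
Proof.
elim: r => [|r IH]; first by rewrite /ball /= inE.
by rewrite ballS; apply: (subsetP (nbh_sub _ _)).
Qed.

Lemma ball_edge (T : finType) (e : rel T) r u x :
  e u x -> ball e r x \subset ball e r.+1 u.
Proof.
move=> eux; elim: r => [|r IH].
  apply/subsetP=> y; rewrite /ball /= inE => /eqP->.
  rewrite in_nbh; apply/orP; right; apply/existsP; exists u; by rewrite inE eqxx.
by rewrite ballS [ball e r.+2 u]ballS; apply: nbh_mono.
Qed.

Lemma ball_mono (T : finType) (e : rel T) r v : ball e r v \subset ball e r.+1 v.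
Proof. by rewrite ballS nbh_sub. Qed.

Lemma ball_sym (T : finType) (e : rel T) r u v : symmetric e ->
  u \in ball e r v -> v \in ball e r u.
Proof.
move=> sym; elim: r u v => [|r IH] u v.
  by rewrite /ball /= !inE => /eqP->.
rewrite ballS in_nbh => /orP[/IH H|].
  by apply: (subsetP (ball_mono _ _ _)).
move=> /existsP[x /andP[xb exu]].
have := IH _ _ xb => vx.
apply: (subsetP (ball_edge r _)) vx; by rewrite sym.
Qed.

Lemma avg_sum (T : finType) (e : rel T) r (D : {set T}) : symmetric e ->
  \sum_(v : T) #|ball e r v :&: D| = \sum_(x in D) #|ball e r x|.
Proof.
move=> sym.
have H1 : forall v, #|ball e r v :&: D| = \sum_(x in D) (x \in ball e r v : nat).
  move=> v; rewrite -sum1_card big_mkcond /= [RHS]big_mkcond /=.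
  apply: eq_bigr => x _; rewrite !inE; by case: (x \in ball e r v); case: (x \in D).
rewrite (eq_bigr _ (fun v _ => H1 v)) exchange_big /=.
apply: eq_bigr => x xD; rewrite -sum1_card [RHS]big_mkcond /=.
apply: eq_bigr => v _.
have: (x \in ball e r v) = (v \in ball e r x).
  by apply/idP/idP; apply: ball_sym.
by move=> ->.
Qed.

Lemma card_bigcup_le (T : finType) (I : Type) (s : seq I) (P : pred I) (A : I -> {set T}) :
  #|\bigcup_(i <- s | P i) A i| <= \sum_(i <- s | P i) #|A i|.
Proof.
elim/big_rec2: _ => [|i X n _ h]; first by rewrite cards0.
apply: leq_trans (leq_card_setU _ _) _.
by rewrite leq_add2l.
Qed.

Lemma nbr_card (T : finType) (e : rel T) v : #|[set u | e v u]| <= max_degree e.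
Proof. rewrite /max_degree. exact: (@leq_bigmax T (fun v => #|[set u | e v u]|)). Qed.

Lemma nbh_card (T : finType) (e : rel T) (X : {set T}) :
  #|nbh_step e X| <= (max_degree e).+1 * #|X|.
Proof.
have -> : nbh_step e X = X :|: \bigcup_(x in X) [set u | e x u].
  apply/setP=> u; rewrite in_nbh !inE; congr (_ || _).
  apply/existsP/bigcupP => [[x /andP[xX exu]]|[x xX H]]; exists x => //.
    by rewrite inE.
  by move: H; rewrite inE xX.
apply: leq_trans (leq_card_setU _ _) _.
rewrite mulSn leq_add2l.
apply: leq_trans (card_bigcup_le _ _ _) _.
rewrite -sum1_card big_distrr /= leq_sum // => x _.
by rewrite muln1 nbr_card.
Qed.

Lemma ball_card (T : finType) (e : rel T) r v :
  #|ball e r v| <= (max_degree e).+1 ^ r.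
Proof.
elim: r => [|r IH]; first by rewrite /ball /= cards1.
rewrite ballS expnS; apply: leq_trans (nbh_card _ _) _.
by rewrite leq_mul2l IH orbT.
Qed.

Lemma ball_card_small (T : finType) (e : rel T) r v : symmetric e ->
  (max_degree e <= 1)%N -> #|ball e r v| <= 2.
Proof.
move=> sym hD.
have sub : forall r, ball e r v \subset ball e 1 v.
  have cl : nbh_step e (ball e 1 v) \subset ball e 1 v.
    apply/subsetP=> y; rewrite in_nbh => /orP[//|/existsP[x /andP[xb exy]]].
    move: xb; rewrite ballS in_nbh /ball /= inE => /orP[/eqP xv|].
      rewrite in_nbh inE; apply/orP; right; apply/existsP; exists v.
      by rewrite inE eqxx -xv.
    move=> /existsP[w /andP[]]; rewrite inE => /eqP -> evx.
    have h := nbr_card e x.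
    have h1 : #|[set u | e x u]| <= 1 by apply: leq_trans h hD.
    have := card_le1_eqP h1 v y; rewrite !inE => H.
    have -> : y = v by apply: H => //; rewrite sym.
    by rewrite eqxx.
  elim=> [|k IH]; first exact: nbh_sub.
  rewrite ballS; apply: subset_trans cl; exact: nbh_mono.
apply: leq_trans (subset_leq_card (sub r)) _.
apply: leq_trans (ball_card _ 1 _) _.
by rewrite expn1 ltnS.
Qed.
Local Open Scope ring_scope.

Definition gg (R : rcfType) (a : nat) : R := 4 * Num.sqrt (Num.sqrt a%:R).

Lemma gg_ge0 (R : rcfType) a : 0 <= gg R a.
Proof. by rewrite /gg mulr_ge0 ?sqrtr_ge0. Qed.

Lemma gg_mono (R : rcfType) (a b : nat) : (a <= b)%N -> gg R a <= gg R b.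
Proof.
move=> ab; rewrite /gg ler_pM2l //; do 2 apply: ler_wsqrtr; by rewrite ler_nat.
Qed.

Lemma gg_diff (R : rcfType) (a b : nat) : (b <= a)%N ->
  a%:R - b%:R <= a%:R * (gg R a - gg R b).
Proof.
move=> ba; case: a ba => [|a] ba.
  have -> : b = 0%N by lia.
  by rewrite subrr mul0r.
set s := Num.sqrt (Num.sqrt (a.+1)%:R : R).
set t := Num.sqrt (Num.sqrt b%:R : R).
have s4 : s ^+ 4 = a.+1%:R.
  by rewrite (_ : 4%N = (2 * 2)%N) // exprM !sqr_sqrtr ?sqrtr_ge0.
have t4 : t ^+ 4 = b%:R.
  by rewrite (_ : 4%N = (2 * 2)%N) // exprM !sqr_sqrtr ?sqrtr_ge0.
have s0 : 0 <= s by apply: sqrtr_ge0.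
have t0 : 0 <= t by apply: sqrtr_ge0.
have ts : t <= s by rewrite /t /s; do 2 apply: ler_wsqrtr; rewrite ler_nat.
have h : (1:R) <= Num.sqrt (a.+1%:R) by rewrite -{1}sqrtr1 ler_wsqrtr // ler1n.
have s1 : 1 <= s by rewrite -{1}sqrtr1 ler_wsqrtr.
rewrite /gg -/s -/t -s4 -t4.
have q1 : s + t <= 2 * s by lra.
have q2 : s ^+ 2 + t ^+ 2 <= 2 * s ^+ 2 by nra.
have q3 : (s + t) * (s ^+ 2 + t ^+ 2) <= (2 * s) * (2 * s ^+ 2).
  apply: ler_pM => //; [lra | nra].
have q4 : s ^+ 3 <= s ^+ 4 by rewrite !exprS; nra.
have h1 : (s + t) * (s ^+ 2 + t ^+ 2) <= 4 * s ^+ 4.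
  apply: le_trans q3 _; rewrite (_ : 2 * s * (2 * s ^+ 2) = 4 * s ^+ 3); first lra.
  by rewrite !exprS expr0; ring.
have h2 : 0 <= s - t by lra.
have e1 : s ^+ 4 - t ^+ 4 = (s - t) * ((s + t) * (s ^+ 2 + t ^+ 2)) by ring.
rewrite e1.
have : (s - t) * ((s + t) * (s ^+ 2 + t ^+ 2)) <= (s - t) * (4 * s ^+ 4).
  by apply: ler_wpM2l.
move=> h3; apply: le_trans h3 _; rewrite le_eqVlt; apply/orP; left; apply/eqP; ring.
Qed.

Lemma sqrt_le2 (R : rcfType) (x : R) : x <= 4 -> Num.sqrt x <= 2.
Proof.
move=> h; have e4 : (4 : R) = 2 ^+ 2 by rewrite expr2; lra.
have := ler_wsqrtr h; rewrite e4.
by rewrite sqrtr_sqr ger0_norm.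
Qed.

Lemma gg_ball (R : rcfType) (T : finType) (e : rel T) r v :
  symmetric e -> (1 <= r)%N ->
  gg R #|ball e r v| <= 8 * Num.max 1 (Num.sqrt ((max_degree e)%:R ^+ r)).
Proof.
move=> sym r1.
have M1 : (1 : R) <= Num.max 1 (Num.sqrt ((max_degree e)%:R ^+ r)) by rewrite le_max lexx.
case: (leqP (max_degree e) 1) => hD.
  apply: le_trans (gg_mono R (ball_card_small r v sym hD)) _.
  rewrite /gg.
  have : Num.sqrt (Num.sqrt (2%:R : R)) <= 2.
    apply: sqrt_le2; apply: le_trans (sqrt_le2 _) _; lra.
  move=> h; lra.
set D := max_degree e.
have hb : (#|ball e r v| <= (D ^ r) ^ 2)%N.
  apply: leq_trans (ball_card _ _ _) _.
  rewrite -expnM mulnC expnM; rewrite leq_exp2r //.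
  by rewrite -/D; nia.
apply: le_trans (gg_mono R hb) _.
rewrite /gg natrX sqrtr_sqr ger0_norm ?exprn_ge0 // natrX.
have : Num.sqrt (D%:R ^+ r : R) <= Num.max 1 (Num.sqrt (D%:R ^+ r)) by rewrite le_max lexx orbT.
move=> h; have := sqrtr_ge0 (D%:R ^+ r : R); lra.
Qed.
Local Close Scope ring_scope.

Lemma in_ballset (T : finType) (e : rel T) r (D : {set T}) u :
  reflect (exists2 x, x \in D & u \in ball e r x) (u \in ballset e r D).
Proof. exact: bigcupP. Qed.

Lemma ballset_rcons (T : finType) (e : rel T) r (l : seq T) x :
  ballset e r [set y in rcons l x] = ballset e r [set y in l] :|: ball e r x.
Proof.
apply/setP=> u; rewrite inE; apply/in_ballset/orP.
  move=> [y]; rewrite inE mem_rcons inE => /orP[/eqP->|yl] uy; first by right.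
  by left; apply/in_ballset; exists y; rewrite ?inE.
case=> [/in_ballset [y yl uy]|ux].
  by exists y => //; move: yl; rewrite !inE mem_rcons inE => ->; rewrite orbT.
by exists x => //; rewrite inE mem_rcons inE eqxx.
Qed.

Lemma ballset0 (T : finType) (e : rel T) r : ballset e r set0 = set0.
Proof. by rewrite /ballset big_set0. Qed.

Lemma cross (p q p' q' : nat) : (0 < q)%N -> (0 < q')%N ->
  ((p%:R / q%:R : rat) <= p'%:R / q'%:R)%R -> (p * q' <= p' * q)%N.
Proof.
move=> q0 q'0.
by rewrite ler_pdivrMr ?ltr0n // mulrAC ler_pdivlMr ?ltr0n // -!natrM ler_nat.
Qed.

Lemma ball_card_gt0 (T : finType) (e : rel T) r v : (0 < #|ball e r v|)%N.
Proof. by apply/card_gt0P; exists v; apply: ball_self. Qed.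

Definition Phi (R : rcfType) (T : finType) (e : rel T) r (Ds W : {set T}) : R :=
  (\sum_(y in Ds) (#|ball e r y|%:R * gg R #|ball e r y :&: W|))%R.

Lemma Phi_ge0 (R : rcfType) (T : finType) (e : rel T) r (Ds W : {set T}) :
  (0 <= Phi R e r Ds W)%R.
Proof. by apply: sumr_ge0 => y _; rewrite mulr_ge0 ?gg_ge0. Qed.

Lemma step (R : rcfType) (T : finType) (e : rel T) r (s : seq T) (Ds : {set T}) x0 i :
  r_dominating e r Ds -> ratio_run e r s -> (i < size s)%N ->
  (0 < #|ball e r (nth x0 s i) :&: ~: ballset e r [set x in take i s]|)%N /\
  (#|ball e r (nth x0 s i)|%:R <=
     Phi R e r Ds (~: ballset e r [set x in take i s])
   - Phi R e r Ds (~: ballset e r [set x in take i s] :\: ball e r (nth x0 s i)))%R.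
Proof.
move=> dom [run _] lti.
have [nd greedy] := run i lti.
set W := ~: ballset e r [set x in take i s].
set x := nth x0 s i.
set N := #|ball e r x :&: W|.
have rv : forall u, ratio_val e r [set x in take i s] u
    = ((#|ball e r u :&: W|)%:R / (#|ball e r u|)%:R)%R.
  by move=> u; rewrite /ratio_val setDE.
have gr : forall u, (#|ball e r u :&: W| * #|ball e r x| <= N * #|ball e r u|)%N.
  move=> u; have := greedy u; rewrite (set_nth_default x0) // -/x !rv.
  by apply: cross; apply: ball_card_gt0.
have N0 : (0 < N)%N.
  case: (set_0Vmem W) => [W0|[u uW]].
    move: nd; rewrite /r_dominating.
    have -> : ballset e r [set x in take i s] = setT.
      by rewrite -[ballset _ _ _]setCK -/W W0 setC0.
    by rewrite eqxx.
  have h := gr u.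
  have : (0 < #|ball e r u :&: W|)%N.
    by apply/card_gt0P; exists u; rewrite inE ball_self uW.
  have := ball_card_gt0 e r x; have := ball_card_gt0 e r u.
  move: h; set a := #|_ :&: _|; set b := #|ball e r x|; set c := #|ball e r u|.
  move=> h h1 h2 h3.
  case: (posnP N) => // N00; move: h; rewrite N00 mul0n leqn0 muln_eq0.
  by case/orP=> /eqP h4; lia.
split=> //.
set wx := #|ball e r x|.
have cover : (N <= \sum_(y in Ds) #|ball e r y :&: (W :&: ball e r x)|)%N.
  apply: leq_trans (card_bigcup_le _ _ _).
  apply: subset_leq_card; apply/subsetP=> u uWx.
  have : u \in ballset e r Ds by move/eqP: dom => ->; rewrite inE.
  move=> /in_ballset [y yD uy]; apply/bigcupP; exists y => //.
  by move: uWx; rewrite !inE uy andbC.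
have key : (N%:R * wx%:R <= N%:R * (Phi R e r Ds W - Phi R e r Ds (W :\: ball e r x)) :> R)%R.
  rewrite /Phi -sumrB mulr_sumr.
  apply: (@le_trans _ _ (\sum_(y in Ds) wx%:R * (#|ball e r y :&: (W :&: ball e r x)|)%:R)%R).
    by rewrite -mulr_sumr -natr_sum mulrC ler_wpM2l ?ler0n // ler_nat.
  apply: ler_sum => y yD.
  set a := #|ball e r y :&: W|.
  set a' := #|ball e r y :&: (W :\: ball e r x)|.
  set d := #|ball e r y :&: (W :&: ball e r x)|.
  set wy := #|ball e r y|.
  have hd : (d + a' = a)%N.
    by rewrite /d /a' /a setIA setIDA cardsID.
  have ha : (a' <= a)%N by rewrite -hd leq_addl.
  have h1 : (a%:R * wx%:R <= N%:R * wy%:R :> R)%R by rewrite -!natrM ler_nat gr.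
  have h2 : (0 <= gg R a - gg R a')%R by rewrite subr_ge0 gg_mono.
  have h3 := gg_diff R ha.
  have hdR : (d%:R = a%:R - a'%:R :> R)%R by rewrite -hd natrD; ring.
  rewrite hdR.
  have h4 : (0 <= wx%:R :> R)%R by rewrite ler0n.
  have h5 : (wx%:R * (a%:R - a'%:R) <= wx%:R * (a%:R * (gg R a - gg R a')) :> R)%R.
    by apply: ler_wpM2l.
  apply: le_trans h5 _.
  have h6 : (a%:R * wx%:R * (gg R a - gg R a') <= N%:R * wy%:R * (gg R a - gg R a') :> R)%R.
    by apply: ler_wpM2r.
  have E1 : (wx%:R * (a%:R * (gg R a - gg R a')) = a%:R * wx%:R * (gg R a - gg R a') :> R)%R by ring.
  have E2 : (N%:R * (wy%:R * gg R a - wy%:R * gg R a') = N%:R * wy%:R * (gg R a - gg R a') :> R)%R by ring.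
  by rewrite E1 E2.
by rewrite ler_pM2l ?ltr0n in key.
Qed.

Lemma tele (R : rcfType) (T : finType) (e : rel T) r (s : seq T) (Ds : {set T}) (x0 : T) k :
  r_dominating e r Ds -> ratio_run e r s -> (k <= size s)%N ->
  (\sum_(x <- take k s) (#|ball e r x|%:R : R) <=
     Phi R e r Ds setT - Phi R e r Ds (~: ballset e r [set x in take k s]))%R
  /\ uniq (take k s).
Proof.
move=> dom run; elim: k => [|k IH] hk.
  rewrite take0 big_nil /=.
  have -> : [set x in [::] : seq T] = set0 by apply/setP=> u; rewrite !inE.
  by rewrite ballset0 setC0 subrr.
have lt : (k < size s)%N by [].
have [IH1 IH2] := IH (ltnW lt).
have [Npos st] := step R x0 dom run lt.
rewrite (take_nth x0 lt) big_rcons /= rcons_uniq IH2 andbT.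
have -> : ~: ballset e r [set x in rcons (take k s) (nth x0 s k)]
   = ~: ballset e r [set x in take k s] :\: ball e r (nth x0 s k).
  by rewrite ballset_rcons setCU setDE.
split.
  rewrite addrC; apply: le_trans (lerD st IH1) _.
  by rewrite le_eqVlt; apply/orP; left; apply/eqP; ring.
apply/negP=> xin.
move: Npos; rewrite card_gt0 => /set0Pn [u].
rewrite !inE => /andP[ub]; apply/negP; rewrite negbK.
by apply/in_ballset; exists (nth x0 s k) => //; rewrite inE.
Qed.

Lemma key (R : rcfType) (T : finType) (e : rel T) r (s : seq T) (Ds : {set T}) :
  symmetric e -> (1 <= r)%N -> ratio_run e r s -> r_dominating e r Ds ->
  (avg_cong e R r [set x in s] <=
   8%:R * Num.max 1 (Num.sqrt ((max_degree e)%:R ^+ r)) * avg_cong e R r Ds)%R.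
Proof.
move=> sym r1 run dom.
set M := (Num.max 1 (Num.sqrt ((max_degree e)%:R ^+ r)) : R)%R.
have M0 : (0 <= M)%R by rewrite le_max ler01.
rewrite /avg_cong -!natr_sum !avg_sum // mulrCA.
apply: ler_wpM2l; first by rewrite invr_ge0 ler0n.
have hPhi : (Phi R e r Ds setT <= 8%:R * M * (\sum_(x in Ds) #|ball e r x|)%:R)%R.
  rewrite /Phi natr_sum mulr_sumr; apply: ler_sum => y _.
  rewrite setIT mulrC; apply: ler_wpM2r; first by rewrite ler0n.
  exact: gg_ball.
apply: le_trans hPhi.
case: s run => [|x0 s'] run.
  have -> : [set x in [::] : seq T] = set0 by apply/setP=> u; rewrite !inE.
  by rewrite big_set0 Phi_ge0.
have [tl un] := tele R x0 dom run (leqnn (size (x0 :: s'))).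
rewrite take_size in tl un.
apply: le_trans (_ : _ <= Phi R e r Ds setT - Phi R e r Ds (~: ballset e r [set x in x0 :: s']))%R _.
  apply: le_trans tl; rewrite natr_sum big_uniq //.
  by rewrite le_eqVlt; apply/orP; left; apply/eqP; apply: eq_bigl => u; rewrite inE.
by rewrite gerBl Phi_ge0.
Qed.

Theorem mainTheorem8 :
  exists C : nat, (0 < C)%N /\
  forall (R : rcfType) (T : finType) (e : rel T) (r : nat),
    simple_graph e -> (1 <= r)%N ->
    forall s : seq T, ratio_run e r s ->
      r_dominating e r [set x in s] /\
      (avg_cong e R r [set x in s]
        <= C%:R * Num.max 1 (Num.sqrt ((max_degree e)%:R ^+ r)) * mac e R r)%R.
Proof.
exists 8%N; split => // R T e r [sym _] r1 s run.
split; first by case: run.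
rewrite /mac.
elim/big_rec: _ => [|D m dD IH].
  apply: key => //; apply/eqP/setP=> u; rewrite inE.
  by apply/in_ballset; exists u; rewrite ?inE ?ball_self.
rewrite minEle; case: ifP => _ //.
exact: key.
Qed.
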